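(* Let $\mathcal G=(V_{\min},V_{\max},E,w,\lambda)$ be a discounted payoff game and $\{\alpha_e>0\mid e\in E\}$ positive numbers such that $\mathcal G$ is improving with respect to the adjusted objectives $f'_\sigma$. Let $\sigma$ be a joint strategy and $\nu$ a basis valuation of $H$ minimising $f'_\sigma$ over all solutions of $H$, with $f'_\sigma(\nu)\neq0$, and assume there are no local improvements of $\sigma$ for $\nu$, i.e. $\mathsf{offset}'(\nu,(v,v'))\ge\mathsf{offset}'(\nu,(v,\sigma(v)))$ for all $(v,v')\in E$. Let $E'$ be a given set of edges with $E_\nu\subseteq E'\subseteq S^\sigma_\nu$ containing an outgoing edge of every vertex. Then there exist a neighbouring valuation $\nu''$ of $\nu$ and a joint strategy $\sigma'$ with $f'_{\sigma'}(\nu'')<f'_\sigma(\nu)$; such a $\sigma'$ is better than $\sigma$ (with respect to the adjusted objectives), and it can be chosen such that $(v,\sigma'(v))\in E'$ for all $v\in V$.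
   Context: A discounted payoff game is a tuple $\mathcal G=(V_{\min},V_{\max},E,w,\lambda)$ with $V=V_{\min}\cup V_{\max}$ finite (disjoint union of Min and Max vertices), $E\subseteq V\times V$ with every vertex having an outgoing edge, $w:E\to\mathbb R$, $\lambda:E\to[0,1)$. A joint strategy is a map $\sigma:V\to V$ with $(v,\sigma(v))\in E$. $H$ is the system of inequations over $x\in\mathbb R^V$ containing, for each edge $e=(v,v')$, $x(v)\ge w_e+\lambda_e x(v')$ if $v\in V_{\max}$ and $x(v)\le w_e+\lambda_e x(v')$ if $v\in V_{\min}$. A basis of $H$ is a set of $|V|$ inequations of $H$ whose equality versions have a unique common solution; if it satisfies $H$ it is the basis valuation of that basis. $\mathsf{offset}(x,(v,v'))=x(v)-(w_{(v,v')}+\lambda_{(v,v')}x(v'))$ if $v\in V_{\max}$, and $(w_{(v,v')}+\lambda_{(v,v')}x(v'))-x(v)$ otherwise; the adjusted offset is $\mathsf{offset}'(x,e)=\alpha_e\,\mathsf{offset}(x,e)$ and the adjusted objective is $f'_\sigma(x)=\sum_{v\in V}\mathsf{offset}'(x,(v,\sigma(v)))$. $S^\sigma_\nu=\{(v,v')\in E\mid\mathsf{offset}'(\nu,(v,v'))=\mathsf{offset}'(\nu,(v,\sigma(v)))\}$ and $E_\nu=\{(v,v')\in E\mid\mathsf{offset}(\nu,(v,v'))=0\}$. $\sigma'$ is better than $\sigma$ iff $\min\{f'_{\sigma'}(x)\mid x\text{ solves }H\}<\min\{f'_\sigma(x)\mid x\text{ solves }H\}$. The game is sharp if every basis valuation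 satisfies exactly $|V|$ inequations of $H$ with equality. A sharp game is improving (with respect to $f'$) if for every joint strategy $\sigma$ and every basis valuation $\nu$ not minimising $f'_\sigma$ over the solutions of $H$, there is a basis obtained from the basis of $\nu$ by exchanging exactly one inequation whose basis valuation $\nu'$ satisfies $f'_\sigma(\nu')<f'_\sigma(\nu)$. A neighbouring valuation of $\nu$ is the basis valuation of a basis obtained from the basis of $\nu$ by exchanging exactly one inequation. *)

(* Defs.v *)
From mathcomp Require Import all_boot all_order all_algebra.
Set Implicit Arguments. Unset Strict Implicit. Unset Printing Implicit Defensive.
Import Order.TTheory GRing.Theory Num.Theory.
Local Open Scope ring_scope.

Section DPG.
Variables (R : realFieldType) (V : finType).
(* vmax v = true iff v is a Max vertex (V_max); V_min is the complement. *)
Variable vmax : pred V.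
Variable edge : rel V.
Variables (w lam alpha : V -> V -> R).

Definition edges : {set V * V} := [set e | edge e.1 e.2].

Definition offset (x : V -> R) (e : V * V) : R :=
  if vmax e.1 then x e.1 - (w e.1 e.2 + lam e.1 e.2 * x e.2)
  else (w e.1 e.2 + lam e.1 e.2 * x e.2) - x e.1.

Definition offset' (x : V -> R) (e : V * V) : R := alpha e.1 e.2 * offset x e.

Definition solvesH (x : V -> R) : Prop := forall e, e \in edges -> 0 <= offset x e.

Definition joint (s : V -> V) : Prop := forall v, edge v (s v).

Definition fobj (s : V -> V) (x : V -> R) : R := \sum_(v : V) offset' x (v, s v).

Definition eqsys (B : {set V * V}) (x : V -> R) : Prop :=
  forall e, e \in B -> offset x e = 0.
Definition is_basis (B : {set V * V}) : Prop :=
  [/\ B \subset edges, #|B| = #|V|,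
      exists x, eqsys B x &
      forall x y, eqsys B x -> eqsys B y -> x =1 y].

Definition basis_val (B : {set V * V}) (nu : V -> R) : Prop :=
  [/\ is_basis B, eqsys B nu & solvesH nu].

Definition is_basis_valuation (nu : V -> R) : Prop := exists B, basis_val B nu.

Definition exchange1 (B B' : {set V * V}) : Prop :=
  exists e e', [/\ e \in B, e' \in edges, e' \notin B & B' = e' |: (B :\ e)].

Definition neighbour (nu nu' : V -> R) : Prop :=
  exists B B', [/\ basis_val B nu, exchange1 B B' & basis_val B' nu'].

Definition minimises (f : (V -> R) -> R) (x : V -> R) : Prop :=
  solvesH x /\ forall y, solvesH y -> f x <= f y.

Definition better (s' s : V -> V) : Prop :=
  exists x y, [/\ minimises (fobj s') x, minimises (fobj s) y &
                  fobj s' x < fobj s y].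

Definition sharp : Prop :=
  forall nu, is_basis_valuation nu ->
    #|[set e in edges | offset nu e == 0]| = #|V|.

Definition improving : Prop :=
  sharp /\
  forall s, joint s -> forall nu, is_basis_valuation nu ->
    ~ minimises (fobj s) nu ->
    exists B B' nu', [/\ basis_val B nu, exchange1 B B', basis_val B' nu' &
                         fobj s nu' < fobj s nu].

Definition Sset (s : V -> V) (nu : V -> R) : {set V * V} :=
  [set e in edges | offset' nu e == offset' nu (e.1, s e.1)].
Definition Enu (nu : V -> R) : {set V * V} :=
  [set e in edges | offset nu e == 0].

End DPG.

(* Main.v *)
Require Import Defs.
From mathcomp Require Import all_boot all_order all_algebra.
From mathcomp Require Import lra ring.
From Stdlib Require Import Classical ClassicalEpsilon.
Set Implicit Arguments. Unset Strict Implicit. Unset Printing Implicit Defensive.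
Import Order.TTheory GRing.Theory Num.Theory.
Local Open Scope ring_scope.

Definition pb (P : Prop) : bool :=
  if excluded_middle_informative P then true else false.
Lemma pbP (P : Prop) : reflect P (pb P).
Proof. by rewrite /pb; case: excluded_middle_informative => h; constructor. Qed.

Section Aux.
Variable R : realFieldType.

Lemma seq_max (X : eqType) (f : X -> R) (l : seq X) : l != [::] ->
  exists2 x, x \in l & forall y, y \in l -> f y <= f x.
Proof.
elim: l => [//|a l IH] _.
case: (eqVneq l [::]) => [->|ln].
  by exists a; rewrite ?mem_seq1 // => y; rewrite mem_seq1 => /eqP->.
have [x xl xm] := IH ln.
case: (leP (f a) (f x)) => h.
  exists x; first by rewrite in_cons xl orbT.
  by move=> y; rewrite in_cons => /orP[/eqP->//|/xm].
exists a; first by rewrite in_cons eqxx.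
move=> y; rewrite in_cons => /orP[/eqP->//|/xm]; lra.
Qed.

Lemma fin_max (X : finType) (P : X -> Prop) (f : X -> R) : (exists x, P x) ->
  exists x, P x /\ forall y, P y -> f y <= f x.
Proof.
move=> [x0 Px0].
have : [seq x <- enum X | pb (P x)] != [::].
  apply/eqP => h; have : x0 \in [seq x <- enum X | pb (P x)].
    by rewrite mem_filter mem_enum andbT; apply/pbP.
  by rewrite h.
move=> /(seq_max f) [x]; rewrite mem_filter => /andP[/pbP Px _] H.
exists x; split => // y Py; apply: H; rewrite mem_filter mem_enum andbT; exact/pbP.
Qed.

Lemma small_t_seq (X : eqType) (a b : X -> R) (l : seq X) :
  (forall x, x \in l -> 0 < a x) ->
  exists t, [/\ 0 < t, t <= 1 & forall x, x \in l -> 0 <= a x + t * b x].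
Proof.
elim: l => [|y l IH] H.
  by exists 1; split => //; lra.
have [|t0 [t0p t01 Ht]] := IH.
  by move=> x xl; apply: H; rewrite in_cons xl orbT.
have ay : 0 < a y by apply: H; rewrite in_cons eqxx.
have nb : 0 <= `|b y| by [].
have q : 0 < a y + `|b y| by lra.
set c := a y / (a y + `|b y|).
have c0 : 0 < c by rewrite /c divr_gt0.
have c1 : c <= 1 by rewrite /c ler_pdivrMr // mul1r; lra.
have cb : c * `|b y| <= a y.
  rewrite /c mulrAC ler_pdivrMr //; nra.
exists (t0 * c); split.
- exact: mulr_gt0.
- nra.
- move=> x; rewrite in_cons => /orP[/eqP->|xl].
    have : - `|b y| <= b y.
      by case: (leP 0 (b y)) => h; [rewrite ger0_norm|rewrite ltr0_norm]; lra.
    move=> hb.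
    have h1 : 0 <= (t0 * c) * (b y + `|b y|) by apply: mulr_ge0; [apply: mulr_ge0; lra|lra].
    have h2 : t0 * (c * `|b y|) <= c * `|b y|.
      by have := mulr_ge0 (ltW c0) nb; nra.
    nra.
  have := Ht x xl; have ax : 0 < a x by apply: H; rewrite in_cons xl orbT.
  case: (leP 0 (b x)) => hb; nra.
Qed.

Lemma small_t_fin (X : finType) (P : X -> Prop) (a b : X -> R) :
  (forall x, P x -> 0 < a x) ->
  exists t, 0 < t /\ forall x, P x -> 0 <= a x + t * b x.
Proof.
move=> H.
have [|t [t0 _ Ht]] := @small_t_seq X a b [seq x <- enum X | pb (P x)].
  by move=> x; rewrite mem_filter => /andP[/pbP /H].
exists t; split => // x Px; apply: Ht; rewrite mem_filter mem_enum andbT; exact/pbP.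
Qed.
End Aux.


Section Game.
Variables (R : realFieldType) (V : finType) (p : pred V) (A : V -> pred V)
  (lam : V -> V -> R).

Definition elig (F : {set V}) (d0 : V -> R) (vt : V * V) : Prop :=
  [/\ vt.1 \in F, A vt.1 vt.2, vt.2 \notin F &
     (p vt.1 \/ forall t', A vt.1 t' ->
        t' \notin F /\ lam vt.1 vt.2 * d0 vt.2 <= lam vt.1 t' * d0 t')].

Lemma game_exists (n : nat) : forall (F : {set V}) (d0 : V -> R), (#|F| <= n)%N ->
  (forall v, v \in F -> exists t, A v t) ->
  (forall v t, v \in F -> A v t -> 0 <= lam v t <= 1) ->
  (forall v, 0 <= d0 v <= 1) ->
  exists d : V -> R, [/\ forall v, v \notin F -> d v = d0 v,
     forall v, 0 <= d v <= 1,
     forall v t, v \in F -> A v t ->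
        (if p v then lam v t * d t <= d v else d v <= lam v t * d t),
     forall v, v \in F -> exists2 t, A v t & d v = lam v t * d t &
     forall Bd, 0 <= Bd -> (forall vt, elig F d0 vt -> lam vt.1 vt.2 * d0 vt.2 <= Bd) ->
        forall v, v \in F -> d v <= Bd].
Proof.
elim: n => [|n IH] F d0 Fn HA Hlam Hd0.
  have F0 : F = set0 by apply/eqP; rewrite -cards_eq0 -leqn0.
  subst F; exists d0; split => //.
  - by move=> v t; rewrite inE.
  - by move=> v; rewrite inE.
  - by move=> Bd _ _ v; rewrite inE.
case: (classic (exists vt, elig F d0 vt)) => [Hex|Hnex].
- have [[vs ts] [Hel Hmax]] := fin_max (fun vt => lam vt.1 vt.2 * d0 vt.2) Hex.
  case: Hel => /= vsF Ats tsF Hmin.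
  set P := lam vs ts * d0 ts.
  have [l0 l1] := andP (Hlam _ _ vsF Ats).
  have [d0ts0 d0ts1] := andP (Hd0 ts).
  have P0 : 0 <= P by rewrite /P mulr_ge0.
  have P1 : P <= 1 by rewrite /P; nra.
  set F' := F :\ vs.
  set d0' := fun x => if x == vs then P else d0 x.
  have F'n : (#|F'| <= n)%N.
    by move: Fn; rewrite /F' (cardsD1 vs F) vsF add1n ltnS.
  have tsvs : ts != vs by apply: contraNneq tsF => ->.
  have [|||d [D1 D2 D3 D4 D5]] := IH F' d0' F'n.
  + by move=> v; rewrite inE => /andP[_ /HA].
  + by move=> v t; rewrite inE => /andP[_ vF] Avt; apply: Hlam.
  + by move=> v; rewrite /d0'; case: eqP => _ //; rewrite P0 P1.
  have dvs : d vs = P by rewrite D1 ?inE ?eqxx // /d0' eqxx.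
  have dts : d ts = d0 ts by rewrite D1 ?inE ?(negbTE tsvs) ?(negbTE tsF) // /d0' (negbTE tsvs).
  have nonF : forall x, x \notin F -> d x = d0 x.
    move=> x xF; have xvs : x != vs by apply: contraNneq xF => ->.
    by rewrite D1 ?inE ?(negbTE xF) ?andbF // /d0' (negbTE xvs).
  have Hnew : forall vt, elig F' d0' vt -> lam vt.1 vt.2 * d0' vt.2 <= P.
    move=> [v t] [/= vF' Avt tF' Hm].
    move: vF'; rewrite inE => /andP[vvs vF].
    have [lv0 lv1] := andP (Hlam _ _ vF Avt).
    case: (eqVneq t vs) => [e|tvs].
      by rewrite e /d0' eqxx /= in lv0 lv1 *; nra.
    have tF : t \notin F by move: tF'; rewrite in_setD1 tvs.
    rewrite /d0' (negbTE tvs).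
    case: Hm => [pv|Hm].
      by apply: (Hmax (v, t)); split => //; left.
    case: (boolP (A v vs)) => Avs.
      have [_ +] := Hm _ Avs; rewrite /d0' eqxx (negbTE tvs).
      have := Hlam _ _ vF Avs; move=> /andP[? ?]; nra.
    apply: (Hmax (v, t)); split => //=; right => t' At'.
    have [t'F' le] := Hm _ At'.
    have t'vs : t' != vs by apply: contraNneq Avs => <-.
    move: t'F' le; rewrite in_setD1 t'vs /= /d0' (negbTE tvs) (negbTE t'vs) => -> //.
  have Bnd : forall v, v \in F -> d v <= P.
    move=> v vF; case: (eqVneq v vs) => [->|vvs]; first by rewrite dvs.
    by apply: D5 => //; rewrite in_setD1 vvs.
  exists d; split => //.
  + move=> v t vF Avt; case: (eqVneq v vs) => [e|vvs]; last first.
      by apply: D3 => //; rewrite in_setD1 vvs.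
    subst v; rewrite dvs; have [lv0 lv1] := andP (Hlam _ _ vsF Avt).
    have [dt0 dt1] := andP (D2 t).
    case: Hmin => [pv|Hm]; rewrite ?pv.
      case: (boolP (t \in F)) => tF.
        have := Bnd _ tF; nra.
      by rewrite nonF //; apply: (Hmax (vs, t)); split => //; left.
    have [tF le] := Hm _ Avt.
    case: (boolP (p vs)) => pv; last by rewrite nonF.
    by rewrite nonF //; apply: (Hmax (vs, t)); split => //; left.
  + move=> v vF; case: (eqVneq v vs) => [->|vvs].
      by exists ts => //; rewrite dvs dts.
    by apply: D4; rewrite in_setD1 vvs.
  + move=> Bd Bd0 HB v vF.
    have PB : P <= Bd by apply: (HB (vs, ts)); split.
    have := Bnd _ vF; lra.
-
  exists (fun x => if x \in F then 0 else d0 x); split.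
  + by move=> v /negbTE ->.
  + by move=> v; case: ifP => _ //; rewrite lexx ler01.
  + move=> v t vF Avt; rewrite vF.
    have [l0 l1] := andP (Hlam _ _ vF Avt).
    case: (boolP (t \in F)) => tF /=; first by rewrite mulr0 lexx; case: (p v).
    case: (boolP (p v)) => pv.
      by exfalso; apply: Hnex; exists (v, t); split => //; left.
    by have [? ?] := andP (Hd0 t); rewrite mulr_ge0.
  + move=> v vF; rewrite vF.
    case: (classic (exists2 t, A v t & t \in F)) => [[t At tF]|Hno].
      by exists t => //; rewrite tF mulr0.
    exfalso.
    have [t0 At0] := HA v vF.
    have [[v' t] [[/= -> Avt] Hm]] :=
      fin_max (fun vt : V * V => - (lam vt.1 vt.2 * d0 vt.2))
              (ex_intro (fun vt : V * V => vt.1 = v /\ A vt.1 vt.2) (v, t0) (conj erefl At0)).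
    have nF : forall t', A v t' -> t' \notin F.
      by move=> t' At'; apply/negP => tF; apply: Hno; exists t'.
    apply: Hnex; exists (v, t); split => //=; first exact: nF.
    case: (boolP (p v)) => pv; [by left|right] => t' At'; split; first exact: nF.
    have := Hm (v, t') (conj erefl At'); rewrite /=; lra.
  + move=> Bd Bd0 _ v vF; by rewrite vF.
Qed.
End Game.


Section Main.
Variables (R : realFieldType) (V : finType) (vmax : pred V) (edge : rel V)
  (w lam alpha : V -> V -> R).

Local Notation off := (offset vmax w lam).
Local Notation fob := (fobj vmax w lam alpha).

Definition Delta (D : V -> R) (e : V * V) : R :=
  if vmax e.1 then D e.1 - lam e.1 e.2 * D e.2 else lam e.1 e.2 * D e.2 - D e.1.

Lemma offset_lin (nu D : V -> R) (t : R) e :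
  off (fun v => nu v + t * D v) e = off nu e + t * Delta D e.
Proof. by rewrite /offset /Delta; case: (vmax e.1) => /=; ring. Qed.

Lemma fobj_ext s (x y : V -> R) : x =1 y -> fob s x = fob s y.
Proof. by move=> h; apply: eq_bigr => v _; rewrite /offset' /offset !h. Qed.

Definition Bs s (c : R) : {set {set V * V}} :=
  [set B | pb (exists z, basis_val vmax edge w lam B z /\ fob s z < c)].

Lemma step_min s : improving vmax edge w lam alpha -> joint edge s ->
  forall x, is_basis_valuation vmax edge w lam x ->
  ~ minimises vmax edge w lam (fob s) x ->
  exists x', is_basis_valuation vmax edge w lam x' /\
     (#|Bs s (fob s x')| < #|Bs s (fob s x)|)%N.
Proof.
move=> [_ Himp] js x Hx Hnm.
have [B [B' [x' [_ _ bv' lt]]]] := Himp s js x Hx Hnm.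
exists x'; split; first by exists B'.
apply: proper_card; apply/properP; split.
  apply/subsetP => B0; rewrite !inE => /pbP [z [bz lz]]; apply/pbP.
  by exists z; split => //; apply: lt_trans lz lt.
exists B'; first by rewrite inE; apply/pbP; exists x'.
rewrite inE; apply/negP => /pbP [z [bz lz]].
case: bz => [[_ _ _ uniq] ez _]; case: bv' => _ ex' _.
have := fobj_ext s (uniq _ _ ez ex'); lra.
Qed.

Lemma exists_min s : improving vmax edge w lam alpha -> joint edge s ->
  forall x, is_basis_valuation vmax edge w lam x ->
  exists y, minimises vmax edge w lam (fob s) y.
Proof.
move=> Hi js x Hx.
move: {2}#|Bs s (fob s x)| (leqnn #|Bs s (fob s x)|) => n.
elim: n x Hx => [|n IH] x Hx Hn; case: (classic (minimises vmax edge w lam (fob s) x)) => hm;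
  try by exists x.
- by have [x' [_ lt]] := step_min Hi js Hx hm; move: lt; rewrite ltnNge (leq_trans Hn) .
- have [x' [Hx' lt]] := step_min Hi js Hx hm.
  by apply: (IH x' Hx'); rewrite -ltnS (leq_trans lt Hn).
Qed.

End Main.


Unset Implicit Arguments.

Theorem theorem4p8 (R : realFieldType) (V : finType) (vmax : pred V)
  (edge : rel V) (w lam alpha : V -> V -> R)
  (Hout : forall v, exists v', edge v v')
  (Hlam : forall v v', edge v v' -> 0 <= lam v v' < 1)
  (Halpha : forall v v', edge v v' -> 0 < alpha v v')
  (Himp : improving vmax edge w lam alpha)
  (s : V -> V) (Hs : joint edge s)
  (nu : V -> R)
  (Hnu : is_basis_valuation vmax edge w lam nu)
  (Hmin : minimises vmax edge w lam (fobj vmax w lam alpha s) nu)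
  (Hnz : fobj vmax w lam alpha s nu != 0)
  (Hloc : forall v v', edge v v' ->
     offset' vmax w lam alpha nu (v, s v) <= offset' vmax w lam alpha nu (v, v'))
  (E' : {set V * V})
  (HE1 : Enu vmax edge w lam nu \subset E')
  (HE2 : E' \subset Sset vmax edge w lam alpha s nu)
  (HE3 : forall v, exists v', (v, v') \in E') :
  exists (nu'' : V -> R) (s' : V -> V),
    [/\ neighbour vmax edge w lam nu nu'', joint edge s',
        fobj vmax w lam alpha s' nu'' < fobj vmax w lam alpha s nu,
        better vmax edge w lam alpha s' s &
        forall v, (v, s' v) \in E'].
Proof.
have [HsolH _] := Hmin.
set T := [set v | offset vmax w lam nu (v, s v) == 0].
have E'edge : forall v t, (v, t) \in E' -> edge v t.
  by move=> v t /(subsetP HE2); rewrite !inE => /andP[].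
have E'S : forall v t, (v, t) \in E' ->
    offset' vmax w lam alpha nu (v, t) = offset' vmax w lam alpha nu (v, s v).
  by move=> v t /(subsetP HE2); rewrite !inE => /andP[_ /eqP].
have Tt : forall v t, v \in T -> (v, t) \in E' -> offset vmax w lam nu (v, t) = 0.
  move=> v t; rewrite inE => /eqP vT vtE.
  have := E'S _ _ vtE; rewrite /offset' /= vT mulr0 => /eqP.
  by rewrite mulf_eq0 (gt_eqF (Halpha _ _ (E'edge _ _ vtE))) /= => /eqP.
have tightT : forall v t, edge v t -> offset vmax w lam nu (v, t) = 0 ->
    v \in T /\ (v, t) \in E'.
  move=> v t evt h.
  have vtE : (v, t) \in E' by apply: (subsetP HE1); rewrite !inE /= evt h eqxx.
  split => //; have := E'S _ _ vtE; rewrite /offset' h mulr0 /= => /esym /eqP.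
  by rewrite inE mulf_eq0 (gt_eqF (Halpha _ _ (Hs v))).
have [u1 u1T] : exists u, u \notin T.
  case: (pickP [pred v | v \notin T]) => [u Hu|H]; first by exists u.
  move: Hnz; rewrite /fobj big1 ?eqxx // => v _.
  have := negbFE (H v); rewrite inE => /eqP h.
  by rewrite /offset' h mulr0.
suff [D [Da Db Dc [u0 [u0T Dd]]]] : exists D : V -> R,
   [/\ forall v t, v \in T -> (v, t) \in E' -> 0 <= Delta vmax lam D (v, t),
       forall v, v \in T -> exists t, (v, t) \in E' /\ Delta vmax lam D (v, t) = 0,
       forall u t, u \notin T -> (u, t) \in E' -> Delta vmax lam D (u, t) <= 0 &
       exists u0, u0 \notin T /\ forall t, (u0, t) \in E' -> Delta vmax lam D (u0, t) < 0].
  have [tau Htau] : exists tau : V -> V, forall v,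
      (v, tau v) \in E' /\ (v \in T -> Delta vmax lam D (v, tau v) = 0).
    suff HH : forall v, exists t,
        (v, t) \in E' /\ (v \in T -> Delta vmax lam D (v, t) = 0).
      by have [tau Ht] := fin_all_exists HH; exists tau.
    move=> v; case: (boolP (v \in T)) => vT.
      by have [t [? ?]] := Db v vT; exists t.
    by have [t ?] := HE3 v; exists t.
  have jtau : joint edge tau by move=> v; apply: E'edge (Htau v).1.
  have Hsum : \sum_(v : V) alpha v (tau v) * Delta vmax lam D (v, tau v) < 0.
    rewrite (bigD1 u0) //=.
    have h1 : alpha u0 (tau u0) * Delta vmax lam D (u0, tau u0) < 0.
      by rewrite pmulr_rlt0 ?Dd ?(Htau u0).1 // Halpha // jtau.
    have h2 : \sum_(i | i != u0) alpha i (tau i) * Delta vmax lam D (i, tau i) <= 0.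
      apply: sumr_le0 => v _; case: (boolP (v \in T)) => vT.
        by rewrite (Htau v).2 // mulr0.
      by rewrite pmulr_rle0 ?Dc ?(Htau v).1 // Halpha // jtau.
    lra.
  have [t0 [t0p Ht0]] := @small_t_fin R (V * V)%type
     (fun e : V * V => edge e.1 e.2 /\ 0 < offset vmax w lam nu e)
     (offset vmax w lam nu) (Delta vmax lam D) (fun e h => proj2 h).
  set y := fun v => nu v + t0 * D v.
  have Hy : solvesH vmax edge w lam y.
    move=> [v t]; rewrite inE /= => evt; rewrite /y offset_lin.
    have := HsolH (v, t); rewrite inE /= => /(_ evt).
    rewrite le0r => /orP[/eqP h|h]; last by apply: Ht0.
    have [vT vtE] := tightT _ _ evt h.
    by rewrite h add0r mulr_ge0 ?Da // ltW.
  have ftau : fobj vmax w lam alpha tau nu = fobj vmax w lam alpha s nu.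
    by apply: eq_bigr => v _; rewrite E'S // (Htau v).1.
  have fy : fobj vmax w lam alpha tau y = fobj vmax w lam alpha tau nu +
      t0 * \sum_(v : V) alpha v (tau v) * Delta vmax lam D (v, tau v).
    rewrite /fobj mulr_sumr -big_split /=; apply: eq_bigr => v _.
    by rewrite /offset' /y offset_lin /=; ring.
  have ylt : fobj vmax w lam alpha tau y < fobj vmax w lam alpha tau nu.
    rewrite fy; have : t0 * \sum_(v : V) alpha v (tau v) * Delta vmax lam D (v, tau v) < 0.
      by rewrite pmulr_rlt0.
    lra.
  have nmin : ~ minimises vmax edge w lam (fobj vmax w lam alpha tau) nu.
    by move=> [_ /(_ y Hy)]; lra.
  have [B [B' [nu'' [bv ex bv' lt]]]] := Himp.2 tau jtau nu Hnu nmin.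
  exists nu'', tau; split.
  - by exists B, B'.
  - exact: jtau.
  - by rewrite -ftau.
  - have [x [xsol xmin]] := exists_min Himp jtau Hnu.
    exists x, nu; split; [by split | exact: Hmin | ].
    have := xmin nu'' (let: And3 _ _ h := bv' in h); rewrite -ftau; lra.
  - by move=> v; apply: (Htau v).1.
have Hl : forall v t, v \in T -> (v, t) \in E' -> 0 <= lam v t <= 1.
  by move=> v t _ /E'edge /Hlam /andP[? ?]; apply/andP; split => //; apply: ltW.
have HA : forall v, v \in T -> exists t, (fun v t => (v, t) \in E') v t.
  by move=> v _; apply: HE3.
case: (boolP [exists u, (u \notin T) && ~~ vmax u]) => [/existsP [u0 /andP[u0T u0m]]|hb].
- have [|d [D1 D2 D3 D4 _]] := @game_exists R V vmax (fun v t => (v, t) \in E') lam #|T| T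
     (fun u => if vmax u then 0 else 1) (leqnn _) HA Hl.
    by move=> u; case: (vmax u); rewrite ?lexx ?ler01.
  exists d; split.
  + move=> v t vT vtE; have := D3 v t vT vtE; rewrite /Delta /=; case: (vmax v); lra.
  + move=> v vT; have [t vtE e] := D4 v vT; exists t; split => //.
    by rewrite /Delta /= e; case: (vmax v); rewrite subrr.
  + move=> u t uT utE; have /andP[l0 l1] := Hlam _ _ (E'edge _ _ utE).
    have /andP[d0 d1] := D2 t.
    rewrite /Delta /= (D1 u uT); case: (vmax u); nra.
  + exists u0; split => // t utE; have /andP[l0 l1] := Hlam _ _ (E'edge _ _ utE).
    have /andP[d0 d1] := D2 t.
    rewrite /Delta /= (D1 u0 u0T) (negbTE u0m); nra.
- have allmax : forall u, u \notin T -> vmax u.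
    move=> u uT; case: (boolP (vmax u)) => // hm; exfalso.
    by move/negP: hb; apply; apply/existsP; exists u; rewrite uT hm.
  have [|d [D1 D2 D3 D4 _]] := @game_exists R V (fun v => ~~ vmax v)
     (fun v t => (v, t) \in E') lam #|T| T (fun u => 1) (leqnn _) HA Hl.
    by move=> u; rewrite lexx ler01.
  exists (fun v => - d v); split.
  + move=> v t vT vtE; have := D3 v t vT vtE; rewrite /Delta /=; case: (vmax v) => /=; lra.
  + move=> v vT; have [t vtE e] := D4 v vT; exists t; split => //.
    by rewrite /Delta /= e; case: (vmax v); ring.
  + move=> u t uT utE; have /andP[l0 l1] := Hlam _ _ (E'edge _ _ utE).
    have /andP[d0 d1] := D2 t.
    rewrite /Delta /= (D1 u uT) (allmax u uT); nra.
  + exists u1; split => // t utE; have /andP[l0 l1] := Hlam _ _ (E'edge _ _ utE).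
    have /andP[d0 d1] := D2 t.
    rewrite /Delta /= (D1 u1 u1T) (allmax u1 u1T); nra.
Qed.
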